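(* Let $p\colon X\to B$ be a Boolean set. For $e,f\in B$ let $e\setminus f$ denote the relative complement of $e\wedge f$ in the interval $[0,e]$. For $x,y\in X$ define $$x\circ y=y|^{p(y)}_{p(x)\wedge p(y)},\qquad y\setminus x=y|^{p(y)}_{p(y)\setminus p(x)},\qquad x\bullet y=x\vee(y\setminus x)$$ (the join being taken in $(X,\le)$; it exists). Then $(X,\circ,\bullet)$ is a right-hand skew Boolean algebra.
   Context: Convention: a ''Boolean algebra'' means a generalized Boolean algebra (relatively complemented distributive lattice with $0$, top not required). Presheaf of sets over a meet semilattice $E$: pairwise disjoint sets $X_e$ ($e\in E$), restriction maps $x\mapsto x|^e_f$, $X_e\to X_f$ for $e\ge f$, with $|^e_e=\mathrm{id}$ and $(x|^e_f)|^f_g=x|^e_g$; $X=\bigcup X_e$, $p(x)=e$ iff $x\in X_e$; global support means all $X_e\ne\emptyset$. Order: $x\le y$ iff $p(x)\le p(y)$ and $x=y|^{p(y)}_{p(x)}$. Compatibility: $x\sim y$ iff $x\wedge y$ exists in $(X,\le)$ and $p(x\wedge y)=p(x)\wedge p(y)$. A Boolean set is a presheaf of sets $p\colon X\to B$ with global support over a Boolean algebra $B$ such that $(X,\le)$ has a least element $0$, every compatible pair has a join in $(X,\le)$, and $p(x)=0$ implies $x=0$. A right-hand skew Boolean algebra is $(B,\circ,\bullet)$ where $(B,\circ)$, $(B,\bullet)$ are bands such that: (SB1) $x\circ(x\bullet y)=x=(y\bullet x)\circ x$ and $x\bullet(x\circ y)=x=(y\circ x)\bullet x$; (SB2) $x\circ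 y\circ x=y\circ x$ and $x\bullet y\bullet x=x\bullet y$; (SB3) $x\bullet y=y\bullet x$ iff $x\circ y=y\circ x$; (SB4) there is $0$ with $0\circ x=0=x\circ 0$; (SB5) each $x^{\downarrow}=\{x\circ s\circ x:s\in B\}$ is a Boolean algebra with top element. *)

(* Defs.v *)
(* A "(generalized) Boolean algebra" = relatively complemented
   distributive lattice with bottom = MathComp's cbDistrLatticeType, whose
   difference  e `\` f  is the complement of e `&` f in [\bot, e]. *)
From HB Require Import structures.
From mathcomp Require Import all_boot all_order.
Set Implicit Arguments. Unset Strict Implicit. Unset Printing Implicit Defensive.
Import Order.TTheory.
Local Open Scope order_scope.

Section BooleanSet.
Context {disp : Order.disp_t} {B : cbDistrLatticeType disp} {X : Type}.
Variables (p : X -> B) (res : X -> B -> X).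
(* X is the disjoint union of the X_e; p x = e iff x \in X_e;
   res x f = x|^{p x}_f (only meaningful for f <= p x). *)

Definition presheaf : Prop :=
  (forall x, res x (p x) = x) /\
  (forall x f, f <= p x -> p (res x f) = f) /\
  (forall x f g, g <= f -> f <= p x -> res (res x f) g = res x g).

Definition global_support : Prop := forall e : B, exists x, p x = e.

Definition psle (x y : X) : Prop := p x <= p y /\ x = res y (p x).

Definition is_meet (x y m : X) : Prop :=
  psle m x /\ psle m y /\ forall z, psle z x -> psle z y -> psle z m.

Definition is_join (x y j : X) : Prop :=
  psle x j /\ psle y j /\ forall z, psle x z -> psle y z -> psle j z.

Definition compatible (x y : X) : Prop :=
  exists m, is_meet x y m /\ p m = p x `&` p y.

Definition boolean_set : Prop :=
  presheaf /\ global_support /\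
  (exists z : X, (forall x, psle z x) /\ (forall x, p x = \bot -> x = z)) /\
  (forall x y, compatible x y -> exists j, is_join x y j).

Definition bs_circ (x y : X) : X := res y (p x `&` p y).
Definition bs_sdiff (y x : X) : X := res y (p y `\` p x).

End BooleanSet.

Section SkewBA.
Context {X : Type}.

Definition band (op : X -> X -> X) : Prop :=
  (forall x y z, op x (op y z) = op (op x y) z) /\ (forall x, op x x = x).

Definition boolean_algebra_on (S : X -> Prop) (meet join : X -> X -> X) : Prop :=
  (forall a b, S a -> S b -> S (meet a b) /\ S (join a b)) /\
  (forall a b, S a -> S b -> meet a b = meet b a /\ join a b = join b a) /\
  (forall a b c, S a -> S b -> S c ->
     meet a (meet b c) = meet (meet a b) c /\ join a (join b c) = join (join a b) c) /\
  (forall a b, S a -> S b -> meet a (join a b) = a /\ join a (meet a b) = a) /\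
  (forall a b c, S a -> S b -> S c ->
     meet a (join b c) = join (meet a b) (meet a c)) /\
  (exists bot top, S bot /\ S top /\
     (forall a, S a -> join bot a = a /\ meet top a = a) /\
     (forall a, S a -> exists a', S a' /\ meet a a' = bot /\ join a a' = top)).

Definition right_skew_boolean_algebra (circ bullet : X -> X -> X) : Prop :=
  band circ /\ band bullet /\
  (forall x y, circ x (bullet x y) = x /\ circ (bullet y x) x = x /\
               bullet x (circ x y) = x /\ bullet (circ y x) x = x) /\
  (forall x y, circ (circ x y) x = circ y x /\ bullet (bullet x y) x = bullet x y) /\
  (forall x y, bullet x y = bullet y x <-> circ x y = circ y x) /\
  (exists z, forall x, circ z x = z /\ circ x z = z) /\
  (forall x, boolean_algebra_on (fun t => exists s, t = circ (circ x s) x) circ bullet).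

End SkewBA.

(* Main.v *)
Require Import Defs.
From HB Require Import structures.
From mathcomp Require Import all_boot all_order.
Import Order.Theory.
Local Open Scope order_scope.
Set Implicit Arguments. Unset Strict Implicit.

Section Dev.
Context {disp : Order.disp_t} {B : cbDistrLatticeType disp} {X : Type}.
Variables (p : X -> B) (res : X -> B -> X).
Hypothesis H1 : forall x, res x (p x) = x.
Hypothesis H2 : forall x f, f <= p x -> p (res x f) = f.
Hypothesis H3 : forall x f g, g <= f -> f <= p x -> res (res x f) g = res x g.
Variable z0 : X.
Hypothesis Hz1 : forall x, psle p res z0 x.
Hypothesis Hz2 : forall x, p x = \bot -> x = z0.
Hypothesis Hgs : global_support p.
Hypothesis Hj : forall x y, compatible p res x y -> exists j, is_join p res x y j.

Local Notation le := (psle p res).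

Lemma pz0 : p z0 = \bot.
Proof.
have [x hx] := Hgs \bot. have [h _] := Hz1 x. apply/le_anti.
by rewrite le0x -hx h.
Qed.

Lemma psle_refl x : le x x.
Proof. by split; rewrite ?H1. Qed.

Lemma psle_trans x y w : le x y -> le y w -> le x w.
Proof.
move=> [h1 e1] [h2 e2]; split; first exact: (Order.POrderTheory.le_trans h1 h2).
by rewrite {1}e1 {1}e2 H3.
Qed.

Lemma le_antisym x y : le x y -> le y x -> x = y.
Proof.
move=> [h1 e1] [h2 e2].
have e : p x = p y by apply/le_anti; rewrite h1 h2.
by rewrite e1 e H1.
Qed.

Lemma le_res x c : c <= p x -> le (res x c) x.
Proof. by move=> h; split; rewrite H2. Qed.

Lemma res_bot x : res x \bot = z0.
Proof. by apply: Hz2; rewrite H2 // le0x. Qed.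

Lemma ext u v a b : p u = p v -> a `|` b = p u ->
  res u a = res v a -> res u b = res v b -> u = v.
Proof.
move=> epu eab ea eb.
have ha : a <= p u by rewrite -eab lexUl.
have hb : b <= p u by rewrite -eab lexUr.
have ha' : a <= p v by rewrite -epu.
have hb' : b <= p v by rewrite -epu.
have hab : a `&` b <= p u by rewrite (le_trans (leIl _ _)).
have cmp : compatible p res (res u a) (res u b).
  exists (res u (a `&` b)); rewrite !H2 //; split=> //.
  split; first by split; rewrite ?leIl ?H2 ?H3 // ?leIl.
  split; first by split; rewrite ?leIr ?H2 ?H3 // ?leIr.
  move=> w [hw1 ew1] [hw2 ew2]; rewrite H2 // in hw1; rewrite H2 // in hw2.
  have hw : p w <= a `&` b by rewrite lexI hw1 hw2.
  split; first by rewrite H2.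
  by rewrite H3 // {1}ew1 H3.
have [j [ja [jb jl]]] := Hj cmp.
have ju : le j u by apply: jl; apply: le_res.
have jv : le j v.
  by apply: jl; [rewrite ea | rewrite eb]; apply: le_res.
move: (ja) (jb) => [ja1 _] [jb1 _]; rewrite H2 // in ja1; rewrite H2 // in jb1.
have ej : p j = p u.
  apply/le_anti; rewrite (proj1 ju) /= -eab leUx ja1 jb1 //.
move: ju jv => [_ eu] [_ ev].
by rewrite -(H1 u) -ej -eu ev ej epu H1.
Qed.

Lemma join_char a b j : p j = p a `|` p b -> res j (p a) = a -> res j (p b) = b ->
  is_join p res a b j.
Proof.
move=> ej ea eb.
have ha : p a <= p j by rewrite ej lexUl.
have hb : p b <= p j by rewrite ej lexUr.
split; first by split.
split; first by split.
move=> w [wa ewa] [wb ewb].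
have hjw : p j <= p w by rewrite ej leUx wa wb.
split=> //.
apply: (@ext _ _ (p a) (p b)); rewrite ?H2 // -?ej //.
  by rewrite H3 // ea.
by rewrite H3 // eb.
Qed.

Lemma join_p a b j : is_join p res a b j -> p j = p a `|` p b.
Proof.
move=> [[ha ea] [[hb eb] jl]].
have hab : p a `|` p b <= p j by rewrite leUx ha hb.
have : le j (res j (p a `|` p b)).
  apply: jl; split.
  - by rewrite H2 // lexUl.
  - by rewrite H3 // lexUl.
  - by rewrite H2 // lexUr.
  - by rewrite H3 // lexUr.
move=> [h _]; rewrite H2 // in h.
by apply/le_anti; rewrite h hab.
Qed.

Lemma join_uniq a b j1 j2 : is_join p res a b j1 -> is_join p res a b j2 -> j1 = j2.
Proof.
move=> h1 h2; apply: le_antisym.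
  by apply: (proj2 (proj2 h1)); [apply: (proj1 h2) | apply: (proj1 (proj2 h2))].
by apply: (proj2 (proj2 h2)); [apply: (proj1 h1) | apply: (proj1 (proj2 h1))].
Qed.

Variable bul : X -> X -> X.
Hypothesis Hb : forall x y, is_join p res x (bs_sdiff p res y x) (bul x y).

Lemma pbul x y : p (bul x y) = p x `|` p y.
Proof. by rewrite (join_p (Hb x y)) /bs_sdiff H2 ?leBx // diffKU. Qed.

Lemma bul_eq x y j : p j = p x `|` p y -> res j (p x) = x ->
  res j (p y `\` p x) = res y (p y `\` p x) -> bul x y = j.
Proof.
move=> ej ex ey; apply: (join_uniq (Hb x y)); apply: join_char.
- by rewrite /bs_sdiff H2 ?leBx // diffKU.
- by [].
- by rewrite /bs_sdiff H2 ?leBx.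
Qed.

Lemma R1 x y c : c <= p x -> res (bul x y) c = res x c.
Proof.
move=> hc; have [[hx ex] _] := Hb x y.
by rewrite {2}ex H3.
Qed.

Lemma R2 x y c : c <= p y -> c `&` p x = \bot -> res (bul x y) c = res y c.
Proof.
move=> hc hd; have [_ [[hs es] _]] := Hb x y.
have hc' : c <= p y `\` p x by rewrite leBRL hc hd eqxx.
move: hs es; rewrite /bs_sdiff H2 ?leBx // => hs es.
by rewrite -(H3 hc' hs) -es H3 // leBx.
Qed.

Lemma res_bul x y c : c <= p x `|` p y ->
  res (bul x y) c = bul (res x (c `&` p x)) (res y (c `&` p y)).
Proof.
move=> hc; have hcb : c <= p (bul x y) by rewrite pbul.
symmetry; apply: bul_eq.
- by rewrite !H2 ?leIr // -meetUr meet_l.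
- by rewrite H2 ?leIr // H3 ?leIl // R1 ?leIr.
- rewrite H2 ?leIr // H2 ?leIr //.
  set d := (c `&` p y) `\` c `&` p x.
  have hd1 : d <= c `&` p y by exact: leBx.
  have hd2 : d <= c by apply: Order.POrderTheory.le_trans hd1 (leIl _ _).
  rewrite H3 // H3 //; last exact: leIr.
  rewrite R2 //; first by apply: Order.POrderTheory.le_trans hd1 (leIr _ _).
  rewrite /d meetBx; apply/eqP; rewrite diff_eq0 -meetA [p y `&` _]meetC meetA.
  exact: leIl.
Qed.

Lemma bul_le u x : le u x -> bul u x = x.
Proof.
move=> [hu eu]; apply: bul_eq; rewrite ?join_r //.
Qed.

Lemma bul_ge x w : p w <= p x -> bul x w = x.
Proof.
move=> hw; apply: bul_eq; rewrite ?H1 ?(joinC _ (p w)) ?join_r //.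
  have -> : p w `\` p x = \bot by apply/eqP; rewrite diff_eq0.
  by rewrite !res_bot.
Qed.

Local Notation circ := (bs_circ p res).

Lemma pcirc x y : p (circ x y) = p x `&` p y.
Proof. by rewrite /bs_circ H2 // leIr. Qed.

Lemma circ_assoc x y z : circ x (circ y z) = circ (circ x y) z.
Proof.
by rewrite {3}/bs_circ pcirc /bs_circ H2 ?leIr // H3 ?leIr // meetA.
Qed.

Lemma circ_idem x : circ x x = x.
Proof. by rewrite /bs_circ meetxx H1. Qed.

Lemma bul_assoc x y z : bul x (bul y z) = bul (bul x y) z.
Proof.
set b := (p y `|` p z) `\` p x.
apply: (@ext _ _ (p x) b).
- by rewrite !pbul joinA.
- by rewrite !pbul /b diffKU.
- by rewrite R1 // R1 ?pbul ?lexUl // R1.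
- rewrite (@R2 x (bul y z) b); first last.
  + by rewrite /b diffIK.
  + by rewrite pbul /b leBx.
  rewrite (@res_bul y z b); last by rewrite /b leBx.
  rewrite (@res_bul (bul x y) z b); last by rewrite pbul -joinA lexUr // /b leBx.
  congr (bul _ _).
  rewrite pbul meetUr diffIK join0x R2 // ?leIr //.
  by rewrite -meetA [p y `&` _]meetC meetA diffIK meet0x.
Qed.

Lemma sb3 x y : bul x y = bul y x <-> circ x y = circ y x.
Proof.
rewrite /bs_circ; split=> E.
- by rewrite -(@R1 y x) ?leIr // -E R1 ?leIl // meetC.
- apply: bul_eq.
  + by rewrite pbul joinC.
  + rewrite res_bul ?pbul ?lexUr // meetxx H1 E bul_le //.
    by apply: le_res; rewrite leIr.
  + by rewrite R1 // leBx.
Qed.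

Lemma meetpx (e c : B) : (e `&` c) `&` e = c `&` e.
Proof. by rewrite [_ `&` e]meetC meetA meetxx meetC. Qed.

Lemma sb5 x : boolean_algebra_on (fun t => exists s, t = circ (circ x s) x) circ bul.
Proof.
pose r c := res x (c `&` p x).
have Sd : forall t, (exists s, t = circ (circ x s) x) -> exists c, t = r c.
  move=> t [s ->]; exists (p x `&` p s); by rewrite /r /bs_circ H2 ?leIr.
have Si : forall c, exists s, r c = circ (circ x s) x.
  move=> c; have [s hs] := Hgs c; exists s.
  by rewrite /r /bs_circ H2 ?leIr // hs meetpx.
have pr : forall c, p (r c) = c `&` p x by move=> c; rewrite /r H2 // leIr.
have cr : forall a b, circ (r a) (r b) = r (a `&` b).
  move=> a b; rewrite /bs_circ !pr /r H3 ?leIr //; congr (res x _).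
  by rewrite meetA -[a `&` p x `&` b]meetA [p x `&` b]meetC !meetA -[_ `&` p x `&` p x]meetA meetxx.
have br : forall a b, bul (r a) (r b) = r (a `|` b).
  move=> a b; have hb : b `&` p x <= (a `|` b) `&` p x by rewrite leI2 ?lexUr.
  have ha : a `&` p x <= (a `|` b) `&` p x by rewrite leI2 ?lexUl.
  apply: bul_eq.
  - by rewrite !pr meetUl.
  - by rewrite pr /r H3 // leIr.
  - rewrite !pr /r.
    have hd : b `&` p x `\` a `&` p x <= b `&` p x by exact: leBx.
    rewrite H3 //; last exact: leIr.
    rewrite H3 //; last exact: leIr.
    exact: Order.POrderTheory.le_trans hd hb.
have Hr : forall a b, a `&` p x = b `&` p x -> r a = r b by move=> a b; rewrite /r => ->.
split.
  move=> a b /Sd[ca ->] /Sd[cb ->]; rewrite cr br; split; apply: Si.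
split.
  by move=> a b /Sd[ca ->] /Sd[cb ->]; rewrite cr br meetC joinC.
split.
  by move=> a b c /Sd[ca ->] /Sd[cb ->] /Sd[cc ->]; rewrite !cr !br meetA joinA.
split.
  by move=> a b /Sd[ca ->] /Sd[cb ->]; rewrite br cr cr br joinKI meetKU.
split.
  by move=> a b c /Sd[ca ->] /Sd[cb ->] /Sd[cc ->]; rewrite !br !cr !br meetUr.
exists (r \bot), (r (p x)); split; first exact: Si.
split; first exact: Si.
split.
  move=> a /Sd[ca ->]; rewrite br cr join0x; split=> //.
  by apply: Hr; rewrite meetpx.
move=> a /Sd[ca ->]; exists (r (p x `\` ca)); split; first exact: Si.
rewrite cr br diffKI; split=> //.
by apply: Hr; rewrite diffKU meetxx meetC joinC joinKI.
Qed.

Lemma main : right_skew_boolean_algebra circ bul.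
Proof.
split; first by split; [exact: circ_assoc | exact: circ_idem].
split; first by split; [exact: bul_assoc | move=> x; exact: bul_ge].
split.
  move=> x y; split.
    by rewrite /bs_circ pbul joinKI R1 // H1.
  split.
    by rewrite /bs_circ pbul meetC joinC joinKI H1.
  split.
    by apply: bul_ge; rewrite pcirc leIl.
  by apply: bul_le; apply: le_res; rewrite leIr.
split.
  move=> x y; split.
    by rewrite /bs_circ pcirc meetpx.
  by apply: bul_ge; rewrite pbul lexUl.
split; first exact: sb3.
split.
  exists z0 => x; rewrite /bs_circ pz0 meet0x meetx0 !res_bot; split=> //.
exact: sb5.
Qed.

Lemma join_exists x y : exists j, is_join p res x (bs_sdiff p res y x) j.
Proof.
apply: Hj; exists z0; rewrite pz0 /bs_sdiff H2 ?leBx // diffKI; split=> //.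
split; first exact: Hz1.
split; first exact: Hz1.
move=> w [hw1 _] [hw2 _]; rewrite H2 ?leBx // in hw2.
have : p w <= \bot by rewrite -(diffKI (p y) (p x)) lexI hw1 hw2.
rewrite lex0 => /eqP /Hz2 ->; exact: psle_refl.
Qed.
End Dev.

Theorem proposition2p5 (disp : Order.disp_t) (B : cbDistrLatticeType disp)
  (X : Type) (p : X -> B) (res : X -> B -> X) :
  boolean_set p res ->
  (forall x y : X, exists j, is_join p res x (bs_sdiff p res y x) j) /\
  (forall bullet : X -> X -> X,
     (forall x y : X, is_join p res x (bs_sdiff p res y x) (bullet x y)) ->
     right_skew_boolean_algebra (bs_circ p res) bullet).
Proof.
move=> [[H1 [H2 H3]] [Hgs [[z0 [Hz1 Hz2]] Hj]]].
split; first exact: (join_exists H1 H2 Hz1 Hz2 Hgs Hj).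
move=> bul Hb; exact: (main H1 H2 H3 Hz1 Hz2 Hgs Hj Hb).
Qed.
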